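(* Let $A\in\mathbb{R}^{n\times n}$ be Metzler, $J\in\mathbb{R}^{n\times n}$ nonnegative, $\bar T>0$, $d_s\in\mathbb{N}$, $\varepsilon>0$ and $\epsilon>0$. Assume there exist polynomial vectors $\zeta,\gamma:\mathbb{R}\to\mathbb{R}^n$ of degree at most $2d_s$ such that: (i) $\gamma$ is CSOS; (ii) $\zeta(\bar T)-\epsilon\mathbf{1}_n\ge0$; (iii) $-\zeta(\tau)^\top A+\dot\zeta(\tau)^\top-\tau(\bar T-\tau)\gamma(\tau)^\top$ is CSOS (as a polynomial row vector in $\tau$); (iv) $-\zeta(\bar T)^\top J+\zeta(0)^\top-\varepsilon\mathbf{1}_n^\top\ge0$. Then $\zeta(\bar T)\in\mathbb{R}^n_{>0}$, $\zeta(\tau)^\top A-\dot\zeta(\tau)^\top\le0$ for all $\tau\in[0,\bar T]$, $\zeta(\bar T)^\top J-\zeta(0)^\top+\varepsilon\mathbf{1}_n^\top\le0$, and the impulsive system $\dot x=Ax$ ($t\ne t_k$), $x(t_k^+)=Jx(t_k)$ is asymptotically stable under constant dwell-time $\bar T$ (i.e. $t_{k+1}-t_k=\bar T$ for all $k$).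
   Context: A univariate polynomial is a sum of squares (SOS) if it equals $\sum_i q_i(\tau)^2$ for some real polynomials $q_i$; a polynomial vector is componentwise SOS (CSOS) if each component is SOS. A matrix is Metzler if its off-diagonal entries are nonnegative and nonnegative if all its entries are. Vector inequalities are componentwise; $\mathbf{1}_n$ is the vector of ones. In the impulsive system $x(t^+)=\lim_{s\downarrow t}x(s)$, and asymptotic stability means global asymptotic stability of the zero solution. *)

(* Defs.v *)
From Stdlib Require Import Reals Lra List.
Open Scope R_scope.

(* Univariate real polynomials as coefficient lists, lowest degree first. *)
Definition rpoly : Type := list R.

Definition peval (p : rpoly) (x : R) : R :=
  fold_right (fun a acc => a + x * acc) 0 p.

Fixpoint pderiv_aux (k : nat) (p : rpoly) : rpoly :=
  match p with
  | nil => nil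
  | a :: p' => (INR k * a) :: pderiv_aux (S k) p'
  end.
Definition pderiv (p : rpoly) : rpoly :=
  match p with nil => nil | _ :: p' => pderiv_aux 1 p' end.

Definition deg_le (p : rpoly) (d : nat) : Prop := (length p <= S d)%nat.

Fixpoint rsum (n : nat) (f : nat -> R) : R :=
  match n with O => 0 | S m => rsum m f + f m end.

Definition is_SOS (f : R -> R) : Prop :=
  exists qs : list rpoly, forall t, f t = fold_right (fun q acc => (peval q t)^2 + acc) 0 qs.

(* vectors of R^n and n x n matrices, indices < n *)
Definition vec := nat -> R.
Definition mat := nat -> nat -> R.

Definition Metzler (n : nat) (A : mat) : Prop :=
  forall i j, (i < n)%nat -> (j < n)%nat -> i <> j -> 0 <= A i j.
Definition nonneg_mat (n : nat) (J : mat) : Prop :=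
  forall i j, (i < n)%nat -> (j < n)%nat -> 0 <= J i j.

Definition mat_vec (n : nat) (M : mat) (v : vec) : vec :=
  fun i => rsum n (fun j => M i j * v j).

Definition norm1 (n : nat) (v : vec) : R := rsum n (fun i => Rabs (v i)).

(* y solves  dy/dt = A y  (on all of R; linear ODE solutions are global) *)
Definition flow_sol (n : nat) (A : mat) (y : R -> vec) : Prop :=
  forall i t, (i < n)%nat ->
    derivable_pt_lim (fun s => y s i) t (mat_vec n A (y t) i).

(* x : [0,oo) -> R^n is a solution of the impulsive system
     xdot = A x  (t <> t_k),   x(t_k^+) = J x(t_k),
   with impulse times t_k = k*T (k >= 1), i.e. t_{k+1} - t_k = T, t_0 = 0,
   and initial condition x(0) = x0.  On each (t_k, t_{k+1}] the trajectory is
   the flow of A started (at t_k) from x0 (k = 0) or from J x(t_k) (k >= 1);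
   in particular x is left-continuous and x(t_k^+) = J x(t_k). *)
Definition impulsive_sol (n : nat) (A J : mat) (T : R) (x0 : vec) (x : R -> vec) : Prop :=
  (forall i, (i < n)%nat -> x 0 i = x0 i) /\
  forall k : nat, exists y : R -> vec,
    flow_sol n A y /\
    (forall i, (i < n)%nat ->
       y (INR k * T) i = (match k with O => x0 i | S _ => mat_vec n J (x (INR k * T)) i end)) /\
    (forall t i, (i < n)%nat -> INR k * T < t <= INR (S k) * T -> x t i = y t i).

Definition impulsive_GAS (n : nat) (A J : mat) (T : R) : Prop :=
  (forall eps, 0 < eps -> exists delta, 0 < delta /\
     forall x0 x, impulsive_sol n A J T x0 x -> norm1 n x0 < delta ->
       forall t, 0 <= t -> norm1 n (x t) < eps) /\
  (forall x0 x, impulsive_sol n A J T x0 x ->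
     forall eps, 0 < eps -> exists T0, forall t, T0 <= t -> norm1 n (x t) < eps).

(* Main.v *)
Require Import Defs.
From Stdlib Require Import Reals List Lra Lia Classical.
Open Scope R_scope.
Lemma rsum_ext : forall n f g, (forall i, (i < n)%nat -> f i = g i) -> rsum n f = rsum n g.
Proof. induction n; intros f g H; simpl; auto. rewrite (IHn f g) by (intros; apply H; lia). rewrite H by lia. auto. Qed.

Lemma rsum_le : forall n f g, (forall i, (i < n)%nat -> f i <= g i) -> rsum n f <= rsum n g.
Proof. induction n; intros f g H; simpl. lra. assert (H1 := IHn f g (fun i Hi => H i ltac:(lia))). assert (H2 := H n ltac:(lia)). lra. Qed.

Lemma rsum_plus : forall n f g, rsum n (fun i => f i + g i) = rsum n f + rsum n g.
Proof. induction n; intros; simpl. ring. rewrite IHn. ring. Qed.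

Lemma rsum_scal : forall n c f, rsum n (fun i => c * f i) = c * rsum n f.
Proof. induction n; intros; simpl. ring. rewrite IHn. ring. Qed.

Lemma rsum_opp : forall n f, rsum n (fun i => - f i) = - rsum n f.
Proof. induction n; intros; simpl. ring. rewrite IHn. ring. Qed.

Lemma rsum_zero : forall n, rsum n (fun _ => 0) = 0.
Proof. induction n; simpl; auto. rewrite IHn; ring. Qed.

Lemma rsum_swap : forall n m (f : nat -> nat -> R),
  rsum n (fun i => rsum m (fun j => f i j)) = rsum m (fun j => rsum n (fun i => f i j)).
Proof.
  induction n; intros m f; simpl.
  - symmetry. apply rsum_zero.
  - rewrite IHn. rewrite <- rsum_plus. reflexivity.
Qed.

Lemma rsum_nonneg : forall n f, (forall i, (i < n)%nat -> 0 <= f i) -> 0 <= rsum n f.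
Proof. intros. rewrite <- (rsum_zero n). apply rsum_le. auto. Qed.

Lemma rsum_ge_term : forall n f i, (i < n)%nat ->
  (forall j, (j < n)%nat -> j <> i -> 0 <= f j) -> f i <= rsum n f.
Proof.
  induction n; intros f i Hi H. lia. simpl.
  destruct (Nat.eq_dec i n) as [->|Hne].
  - assert (0 <= rsum n f) by (apply rsum_nonneg; intros; apply H; lia). lra.
  - assert (f i <= rsum n f) by (apply IHn; [lia| intros; apply H; lia]).
    assert (0 <= f n) by (apply H; lia). lra.
Qed.

Lemma rsum_le_except : forall n f g i c, (i < n)%nat ->
  (forall j, (j < n)%nat -> j <> i -> f j <= g j) -> f i <= g i + c ->
  rsum n f <= rsum n g + c.
Proof.
  induction n; intros f g i c Hi H Hc. lia. simpl.
  destruct (Nat.eq_dec i n) as [->|Hne].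
  - assert (rsum n f <= rsum n g) by (apply rsum_le; intros; apply H; lia). lra.
  - assert (rsum n f <= rsum n g + c) by (apply (IHn f g i c); [lia| intros; apply H; lia | auto]).
    assert (f n <= g n) by (apply H; lia). lra.
Qed.

Lemma rsum_abs : forall n f, Rabs (rsum n f) <= rsum n (fun i => Rabs (f i)).
Proof.
  induction n; intros; simpl. rewrite Rabs_R0; lra.
  eapply Rle_trans. apply Rabs_triang. specialize (IHn f). lra.
Qed.

Lemma rsum_deriv : forall n (f : nat -> R -> R) f' x,
  (forall i, (i < n)%nat -> derivable_pt_lim (f i) x (f' i)) ->
  derivable_pt_lim (fun s => rsum n (fun i => f i s)) x (rsum n f').
Proof.
  induction n; intros f f' x H; simpl.
  - apply derivable_pt_lim_ext with (f := fct_cte 0). intro; reflexivity.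
    apply derivable_pt_lim_const.
  - assert (H1 := IHn f f' x (fun i Hi => H i ltac:(lia))).
    assert (H2 := derivable_pt_lim_plus _ _ x _ _ H1 (H n ltac:(lia))).
    eapply derivable_pt_lim_ext; [|exact H2]. intro; reflexivity.
Qed.
Lemma real_ind (a b : R) (P : R -> Prop) : a <= b ->
 (forall t, a <= t <= b -> (forall s, a <= s < t -> P s) -> P t) ->
 (forall t, a <= t < b -> (forall s, a <= s <= t -> P s) ->
     exists h, 0 < h /\ forall s, t < s < t + h -> P s) ->
 forall t, a <= t <= b -> P t.
Proof.
  intros Hab H3 H2.
  set (E := fun x => a <= x <= b /\ forall s, a <= s <= x -> P s).
  assert (Pa : P a) by (apply H3; [lra| intros; lra]).
  assert (HE : exists x, E x).
  { exists a. split. lra. intros s Hs. replace s with a by lra. exact Pa. }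
  assert (Hb : bound E). { exists b. intros x [Hx _]. lra. }
  destruct (completeness E Hb HE) as [c [Hub Hlub]].
  assert (Hac : a <= c) by (apply Hub; split; [lra| intros s Hs; replace s with a by lra; exact Pa]).
  assert (Hcb : c <= b) by (apply Hlub; intros x [Hx _]; lra).
  assert (Hbelow : forall s, a <= s < c -> P s).
  { intros s Hs. apply NNPP. intro HnP.
    assert (Hup : is_upper_bound E s).
    { intros x [Hx Hx2]. destruct (Rle_lt_dec x s) as [|Hlt]. auto.
      exfalso. apply HnP. apply Hx2. lra. }
    specialize (Hlub s Hup). lra. }
  assert (Pc : P c) by (apply H3; [lra|exact Hbelow]).
  assert (Hall : forall s, a <= s <= c -> P s).
  { intros s Hs. destruct (Req_dec s c) as [->|]; auto. apply Hbelow. lra. }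
  destruct (Rle_lt_dec b c) as [Hbc|Hcb'].
  - intros t Ht. apply Hall. lra.
  - exfalso. destruct (H2 c ltac:(lra) Hall) as [h [Hh Hh2]].
    set (c' := Rmin (c + h/2) b).
    assert (Ec' : E c').
    { split. unfold c'. split. apply Rmin_glb; lra. apply Rmin_r.
      intros s Hs. destruct (Rle_lt_dec s c). apply Hall; lra.
      apply Hh2. split. auto. assert (c' <= c + h/2) by apply Rmin_l. lra. }
    assert (c' <= c) by (apply Hub; exact Ec').
    assert (c < c'). { unfold c'. apply Rmin_glb_lt; lra. }
    lra.
Qed.

Lemma fin_nbhd : forall n (Q : nat -> R -> Prop) t,
  (forall i, (i<n)%nat -> exists h, 0<h /\ forall s, t < s < t+h -> Q i s) ->
  exists h, 0<h /\ forall s, t<s<t+h -> forall i, (i<n)%nat -> Q i s.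
Proof.
  induction n; intros Q t H.
  - exists 1. split. lra. intros; lia.
  - destruct (IHn Q t (fun i Hi => H i ltac:(lia))) as [h1 [Hh1 P1]].
    destruct (H n ltac:(lia)) as [h2 [Hh2 P2]].
    exists (Rmin h1 h2). split. apply Rmin_pos; auto.
    intros s Hs i Hi. assert (Rmin h1 h2 <= h1) by apply Rmin_l. assert (Rmin h1 h2 <= h2) by apply Rmin_r.
    destruct (Nat.eq_dec i n) as [->|]. apply P2; lra. apply P1; [lra| lia].
Qed.

Lemma deriv_pos_nbhd : forall f t l, derivable_pt_lim f t l -> 0 < f t ->
  exists h, 0 < h /\ forall s, Rabs (s - t) < h -> 0 < f s.
Proof.
  intros f t l Hd Hp.
  assert (Hc : continuity_pt f t) by (apply derivable_continuous_pt; exists l; exact Hd).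
  unfold continuity_pt, continue_in, limit1_in, limit_in in Hc.
  destruct (Hc (f t) Hp) as [alp [Ha Hx]].
  exists alp. split. auto. intros s Hs.
  destruct (Req_dec s t) as [->|Hne]. auto.
  assert (Hd2 : R_dist (f s) (f t) < f t).
  { apply Hx. split. split. constructor. auto. exact Hs. }
  unfold R_dist in Hd2. apply Rabs_def2 in Hd2. lra.
Qed.

Lemma sos_nonneg : forall f, is_SOS f -> forall t, 0 <= f t.
Proof.
  intros f [qs Hq] t. rewrite Hq. clear Hq. induction qs as [|q qs IH]; simpl fold_right. lra.
  apply Rplus_le_le_0_compat; [apply pow2_ge_0 | exact IH].
Qed.

Lemma exp_deriv : forall a s, derivable_pt_lim (fun s => exp (a * s)) s (exp (a * s) * a).
Proof.
  intros a s.
  assert (H1 : derivable_pt_lim (fun s => a * s) s (a * 1)).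
  { apply derivable_pt_lim_ext with (f := mult_real_fct a id). intro; reflexivity.
    apply derivable_pt_lim_scal. apply derivable_pt_lim_id. }
  assert (H := derivable_pt_lim_comp _ exp s _ _ H1 (derivable_pt_lim_exp (a * s))).
  eapply derivable_pt_lim_ext; [|replace (exp (a*s) * a) with (exp (a * s) * (a * 1)) by ring; exact H].
  intro; reflexivity.
Qed.

Section Pos.
Variable n : nat.
Variable A : mat.
Variables z zd : nat -> R -> R.
Variable T : R.
Hypothesis HM : Metzler n A.
Hypothesis Hder : forall i s, (i < n)%nat -> derivable_pt_lim (z i) s (zd i s).
Hypothesis HD : forall tau, 0 <= tau <= T -> forall j, (j < n)%nat ->
  rsum n (fun i => z i tau * A i j) <= zd j tau.

Lemma z_lower : forall t, 0 <= t <= T -> (forall s, 0 <= s < t -> forall j, (j < n)%nat -> 0 <= z j s) ->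
  forall i, (i < n)%nat -> exp (A i i * t) * z i 0 <= z i t.
Proof.
  intros t Ht Hpos i Hi.
  destruct (Req_dec t 0) as [->|Ht0]. rewrite Rmult_0_r, exp_0. lra.
  set (a := A i i).
  set (g := fun s => z i s * exp (- a * s)).
  set (g' := fun s => zd i s * exp (-a * s) + z i s * (exp (- a * s) * - a)).
  assert (Hg : forall c, 0 <= c <= t -> derivable_pt_lim g c (g' c)).
  { intros c _. unfold g, g'.
    assert (H := derivable_pt_lim_mult (z i) (fun s => exp (-a * s)) c _ _ (Hder i c Hi) (exp_deriv (-a) c)).
    eapply derivable_pt_lim_ext; [|exact H]. intro; reflexivity. }
  destruct (MVT_cor2 g g' 0 t ltac:(lra) Hg) as [c [Heq Hc]].
  assert (Hg'pos : 0 <= g' c).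
  { unfold g'. 
    assert (Hs : z i c * A i i <= rsum n (fun j => z j c * A j i)).
    { apply (rsum_ge_term n (fun j => z j c * A j i) i Hi). intros j Hj Hji.
      apply Rmult_le_pos. apply Hpos; [lra|auto]. apply HM; auto. }
    assert (HDc := HD c ltac:(lra) i Hi).
    assert (0 < exp (-a * c)) by apply exp_pos.
    fold a in Hs.
    replace (zd i c * exp (- a * c) + z i c * (exp (- a * c) * - a)) with
      (exp (-a * c) * (zd i c - a * z i c)) by ring.
    apply Rmult_le_pos. lra. lra. }
  assert (Hgt : g 0 <= g t) by (assert (0 <= g' c * (t - 0)) by (apply Rmult_le_pos; lra); lra).
  unfold g in Hgt. rewrite Rmult_0_r, exp_0, Rmult_1_r in Hgt.
  assert (Hz : z i t = z i t * exp (- a * t) * exp (a * t)).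
  { rewrite Rmult_assoc, <- exp_plus. replace (-a * t + a * t) with 0 by ring. rewrite exp_0. ring. }
  rewrite Hz. fold a. 
  assert (0 < exp (a * t)) by apply exp_pos.
  rewrite (Rmult_comm (exp (a * t))). apply Rmult_le_compat_r; lra.
Qed.

Hypothesis Hz0 : forall i, (i < n)%nat -> 0 < z i 0.

Lemma z_pos : 0 <= T -> forall t, 0 <= t <= T -> forall i, (i < n)%nat -> 0 < z i t.
Proof.
  intros HT. apply (real_ind 0 T (fun t => forall i, (i < n)%nat -> 0 < z i t) HT).
  - intros t Ht Hb i Hi. 
    assert (H := z_lower t Ht (fun s Hs j Hj => Rlt_le _ _ (Hb s Hs j Hj)) i Hi).
    assert (0 < exp (A i i * t) * z i 0) by (apply Rmult_lt_0_compat; [apply exp_pos | auto]). lra.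
  - intros t Ht Hall.
    destruct (fin_nbhd n (fun i s => 0 < z i s) t) as [h [Hh P]].
    + intros i Hi. destruct (deriv_pos_nbhd (z i) t _ (Hder i t Hi) (Hall t ltac:(lra) i Hi)) as [h [Hh P]].
      exists h. split; auto. intros s Hs. apply P. rewrite Rabs_right; lra.
    + exists h. split; auto.
Qed.

End Pos.
Lemma pderiv_aux_eq : forall p k x,
  peval (pderiv_aux k p) x = INR k * peval p x + x * peval (pderiv p) x.
Proof.
  induction p as [|a p IH]; intros k x; simpl.
  - ring.
  - rewrite IH. destruct p as [|b p'].
    + simpl. ring.
    + change (pderiv (b :: p')) with (pderiv_aux 1 p') in *.
      rewrite (IH 1%nat). rewrite ?S_INR. simpl. ring.
Qed.

Lemma peval_deriv : forall p x, derivable_pt_lim (peval p) x (peval (pderiv p) x).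
Proof.
  induction p as [|a p IH]; intros x; simpl.
  - apply derivable_pt_lim_ext with (f := fct_cte 0). intro; reflexivity.
    apply derivable_pt_lim_const.
  - assert (H := derivable_pt_lim_plus (fct_cte a) (id * peval p)%F x 0 _
      (derivable_pt_lim_const a x) (derivable_pt_lim_mult id (peval p) x _ _ (derivable_pt_lim_id x) (IH x))).
    replace (peval (pderiv_aux 1 p) x) with (0 + (1 * peval p x + id x * peval (pderiv p) x)).
    + eapply derivable_pt_lim_ext; [|exact H]. intro z. reflexivity.
    + rewrite pderiv_aux_eq. unfold id. simpl. ring.
Qed.
Lemma sqrt_ge_abs : forall y d, 0 <= d -> Rabs y <= sqrt (y ^ 2 + d).
Proof.
  intros y d Hd. rewrite <- sqrt_Rsqr_abs. apply sqrt_le_1_alt.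
  unfold Rsqr. simpl. nra.
Qed.

Lemma sqrt_le_abs_plus : forall y d, 0 <= d -> sqrt (y ^ 2 + d) <= Rabs y + sqrt d.
Proof.
  intros y d Hd. 
  assert (H0 : 0 <= Rabs y + sqrt d) by (assert (0 <= sqrt d) by apply sqrt_pos; assert (0 <= Rabs y) by apply Rabs_pos; lra).
  rewrite <- (sqrt_Rsqr (Rabs y + sqrt d)) by exact H0.
  apply sqrt_le_1_alt. unfold Rsqr.
  assert (Hs : sqrt d * sqrt d = d) by (apply sqrt_sqrt; auto).
  assert (Ha : Rabs y * Rabs y = y ^ 2) by (rewrite <- Rabs_mult; simpl; rewrite Rmult_1_r; rewrite Rabs_right; [ring| apply Rle_ge, Rle_0_sqr]).
  assert (0 <= Rabs y * sqrt d) by (apply Rmult_le_pos; [apply Rabs_pos| apply sqrt_pos]).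
  nra.
Qed.

Lemma key_diag : forall a y d, 0 < d ->
  a * y * y / sqrt (y ^ 2 + d) <= a * sqrt (y ^ 2 + d) + Rabs a * sqrt d.
Proof.
  intros a y d Hd.
  set (u := sqrt (y ^ 2 + d)).
  assert (Hsd : 0 < sqrt d) by (apply sqrt_lt_R0; auto).
  assert (Hud : sqrt d <= u) by (unfold u; apply sqrt_le_1_alt; nra).
  assert (Hu : 0 < u) by lra.
  assert (Huu : u * u = y ^ 2 + d) by (apply sqrt_sqrt; nra).
  assert (Hdd : sqrt d * sqrt d = d) by (apply sqrt_sqrt; lra).
  apply (Rmult_le_reg_r u); auto.
  unfold Rdiv. rewrite Rmult_assoc, Rinv_l, Rmult_1_r by lra.
  assert (Ha : - a <= Rabs a) by (rewrite <- Rabs_Ropp; apply RRle_abs).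
  assert (0 <= Rabs a) by apply Rabs_pos.
  assert (Hx : d <= sqrt d * u) by nra.
  assert (- a * d <= Rabs a * (sqrt d * u)) by nra.
  nra.
Qed.

Lemma key_off : forall a yj yi d, 0 < d -> 0 <= a ->
  a * yj * yi / sqrt (yi ^ 2 + d) <= a * sqrt (yj ^ 2 + d).
Proof.
  intros a yj yi d Hd Ha.
  assert (Hu : 0 < sqrt (yi ^ 2 + d)) by (apply sqrt_lt_R0; nra).
  assert (H1 : Rabs yi <= sqrt (yi ^ 2 + d)) by (apply sqrt_ge_abs; lra).
  assert (H2 : Rabs yj <= sqrt (yj ^ 2 + d)) by (apply sqrt_ge_abs; lra).
  assert (H3 : yj * yi <= Rabs yj * Rabs yi) by (rewrite <- Rabs_mult; apply RRle_abs).
  assert (H4 : Rabs yj * Rabs yi <= sqrt (yj ^ 2 + d) * sqrt (yi ^ 2 + d)) by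
    (apply Rmult_le_compat; auto using Rabs_pos).
  apply (Rmult_le_reg_r (sqrt (yi ^ 2 + d))); auto.
  unfold Rdiv. rewrite Rmult_assoc, Rinv_l, Rmult_1_r by lra.
  nra.
Qed.

Lemma lim_sqrt_arg : forall a b M, (forall d, 0 < d -> a <= b + M * sqrt d) -> a <= b.
Proof.
  intros a b M H. destruct (Rle_lt_dec M 0) as [HM|HM].
  - specialize (H 1 ltac:(lra)). rewrite sqrt_1 in H. lra.
  - apply Rnot_lt_le. intro Hlt.
    set (e := (a - b) / (2 * M)).
    assert (He : 0 < e) by (unfold e; apply Rdiv_lt_0_compat; lra).
    specialize (H (e * e) ltac:(nra)). rewrite sqrt_square in H by lra.
    unfold e in H. replace (M * ((a - b) / (2 * M))) with ((a - b) / 2) in H by (field; lra). lra.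
Qed.
Section Lyap.
Variable n : nat.
Variable A : mat.
Variables z zd : nat -> R -> R.
Variables T Z : R.
Hypothesis HM : Metzler n A.
Hypothesis Hder : forall i s, (i < n)%nat -> derivable_pt_lim (z i) s (zd i s).
Hypothesis HD : forall tau, 0 <= tau <= T -> forall j, (j < n)%nat ->
  rsum n (fun i => z i tau * A i j) <= zd j tau.
Hypothesis Hzp : forall tau, 0 <= tau <= T -> forall i, (i < n)%nat -> 0 <= z i tau.
Hypothesis HZ0 : 0 <= Z.
Hypothesis HZ : forall tau, 0 <= tau <= T -> forall i, (i < n)%nat -> z i tau <= Z.
Variable y : R -> vec.
Variable t0 : R.
Hypothesis Hy : flow_sol n A y.

Lemma Y_deriv : forall i s, (i < n)%nat ->
  derivable_pt_lim (fun s => y (t0 + s) i) s (mat_vec n A (y (t0 + s)) i).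
Proof.
  intros i s Hi.
  assert (H1 : derivable_pt_lim (fun s => t0 + s) s (0 + 1)).
  { eapply derivable_pt_lim_ext; [|apply (derivable_pt_lim_plus (fct_cte t0) id); [apply derivable_pt_lim_const|apply derivable_pt_lim_id]].
    intro; reflexivity. }
  assert (H := derivable_pt_lim_comp _ (fun t => y t i) s _ _ H1 (Hy i (t0 + s) Hi)).
  replace (mat_vec n A (y (t0 + s)) i) with (mat_vec n A (y (t0 + s)) i * (0 + 1)) by ring.
  eapply derivable_pt_lim_ext; [|exact H]. intro; reflexivity.
Qed.

Lemma zT_deriv : forall i s, (i < n)%nat ->
  derivable_pt_lim (fun s => z i (T - s)) s (zd i (T - s) * -1).
Proof.
  intros i s Hi.
  assert (H1 : derivable_pt_lim (fun s => T - s) s (0 + - 1)).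
  { eapply derivable_pt_lim_ext; [|apply (derivable_pt_lim_plus (fct_cte T) (opp_fct id)); [apply derivable_pt_lim_const|apply derivable_pt_lim_opp; apply derivable_pt_lim_id]].
    intro; reflexivity. }
  assert (H := derivable_pt_lim_comp _ (z i) s _ _ H1 (Hder i (T - s) Hi)).
  replace (zd i (T - s) * -1) with (zd i (T - s) * (0 + -1)) by ring.
  eapply derivable_pt_lim_ext; [|exact H]. intro; reflexivity.
Qed.

Definition u d i s := sqrt (y (t0 + s) i ^ 2 + d).
Definition du d i s := mat_vec n A (y (t0 + s)) i * y (t0 + s) i / u d i s.

Lemma u_pos : forall d i s, 0 < d -> 0 < u d i s.
Proof. intros. unfold u. apply sqrt_lt_R0. nra. Qed.

Lemma u_deriv : forall d i s, 0 < d -> (i < n)%nat -> derivable_pt_lim (u d i) s (du d i s).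
Proof.
  intros d i s Hd Hi.
  set (Y := fun s => y (t0 + s) i).
  assert (H1 := derivable_pt_lim_mult Y Y s _ _ (Y_deriv i s Hi) (Y_deriv i s Hi)).
  assert (H2 := derivable_pt_lim_plus _ (fct_cte d) s _ _ H1 (derivable_pt_lim_const d s)).
  assert (Hpos : 0 < (Y * Y + fct_cte d)%F s) by (unfold Y, fct_cte, mult_fct, plus_fct; nra).
  assert (H3 := derivable_pt_lim_comp _ sqrt s _ _ H2 (derivable_pt_lim_sqrt _ Hpos)).
  assert (Hu := u_pos d i s Hd).
  replace (du d i s) with (/ (2 * sqrt ((Y * Y + fct_cte d)%F s)) *
        (mat_vec n A (y (t0 + s)) i * Y s + Y s * mat_vec n A (y (t0 + s)) i + 0)).
  - eapply derivable_pt_lim_ext; [|exact H3]. intro w. unfold comp, u, Y, fct_cte, mult_fct, plus_fct.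
    f_equal. ring.
  - unfold du. replace (sqrt ((Y * Y + fct_cte d)%F s)) with (u d i s).
    + unfold Y. field. lra.
    + unfold u, Y, fct_cte, mult_fct, plus_fct. f_equal. ring.
Qed.

Definition W d s := rsum n (fun i => z i (T - s) * u d i s).
Definition W' d s := rsum n (fun i => zd i (T - s) * -1 * u d i s + z i (T - s) * du d i s).

Lemma W_deriv : forall d s, 0 < d -> derivable_pt_lim (W d) s (W' d s).
Proof.
  intros d s Hd. unfold W, W'.
  apply (rsum_deriv n (fun i s => z i (T - s) * u d i s)).
  intros i Hi.
  assert (H := derivable_pt_lim_mult _ _ s _ _ (zT_deriv i s Hi) (u_deriv d i s Hd Hi)).
  eapply derivable_pt_lim_ext; [|exact H]. intro; reflexivity.
Qed.


Lemma du_bound : forall d i s, 0 < d -> (i < n)%nat ->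
  du d i s <= rsum n (fun j => A i j * u d j s) + Rabs (A i i) * sqrt d.
Proof.
  intros d i s Hd Hi.
  assert (Hu := u_pos d i s Hd).
  assert (Heq : du d i s = rsum n (fun j => A i j * y (t0 + s) j * y (t0 + s) i / u d i s)).
  { unfold du, mat_vec. 
    transitivity ((y (t0 + s) i / u d i s) * rsum n (fun j => A i j * y (t0 + s) j)).
    - field. lra.
    - rewrite <- rsum_scal. apply rsum_ext. intros. field. lra. }
  rewrite Heq. apply (rsum_le_except n _ _ i); auto.
  - intros j Hj Hji. unfold u. apply key_off; auto.
  - unfold u. apply key_diag; auto.
Qed.

Lemma W'_bound : forall d s, 0 < d -> 0 <= s <= T ->
  W' d s <= Z * rsum n (fun i => Rabs (A i i)) * sqrt d.
Proof.
  intros d s Hd Hs. set (tau := T - s).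
  assert (Htau : 0 <= tau <= T) by (unfold tau; lra).
  unfold W'. fold tau.
  apply Rle_trans with (rsum n (fun i => zd i tau * -1 * u d i s +
     (rsum n (fun j => z i tau * A i j * u d j s) + z i tau * Rabs (A i i) * sqrt d))).
  { apply rsum_le. intros i Hi.
    assert (H := du_bound d i s Hd Hi).
    assert (H0 := Hzp tau Htau i Hi).
    replace (rsum n (fun j => z i tau * A i j * u d j s)) with (z i tau * rsum n (fun j => A i j * u d j s)).
    - assert (z i tau * du d i s <= z i tau * (rsum n (fun j => A i j * u d j s) + Rabs (A i i) * sqrt d)) by (apply Rmult_le_compat_l; auto).
      lra.
    - rewrite <- rsum_scal. apply rsum_ext. intros; ring. }
  rewrite !rsum_plus.
  rewrite rsum_swap.
  assert (H1 : rsum n (fun j => rsum n (fun i => z i tau * A i j * u d j s)) <=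
               rsum n (fun j => zd j tau * u d j s)).
  { apply rsum_le. intros j Hj.
    replace (rsum n (fun i => z i tau * A i j * u d j s)) with (rsum n (fun i => z i tau * A i j) * u d j s).
    - apply Rmult_le_compat_r. left; apply u_pos; auto. apply HD; auto.
    - rewrite Rmult_comm, <- rsum_scal. apply rsum_ext; intros; ring. }
  assert (H2 : rsum n (fun i => zd i tau * -1 * u d i s) = - rsum n (fun j => zd j tau * u d j s)).
  { rewrite <- rsum_opp. apply rsum_ext; intros; ring. }
  assert (H3 : rsum n (fun i => z i tau * Rabs (A i i) * sqrt d) <= rsum n (fun i => Z * Rabs (A i i) * sqrt d)).
  { apply rsum_le. intros i Hi. apply Rmult_le_compat_r. apply sqrt_pos.
    apply Rmult_le_compat_r. apply Rabs_pos. apply HZ; auto. }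
  assert (H4 : rsum n (fun i => Z * Rabs (A i i) * sqrt d) = Z * rsum n (fun i => Rabs (A i i)) * sqrt d).
  { rewrite Rmult_comm, <- rsum_scal, <- rsum_scal. apply rsum_ext; intros; ring. }
  lra.
Qed.


Lemma lyap_interval : 0 < T -> forall s, 0 <= s <= T ->
  rsum n (fun i => z i (T - s) * Rabs (y (t0 + s) i)) <= rsum n (fun i => z i T * Rabs (y t0 i)).
Proof.
  intros HT s Hs.
  set (K := Z * rsum n (fun i => Rabs (A i i))).
  assert (HK : 0 <= K) by (unfold K; apply Rmult_le_pos; auto; apply rsum_nonneg; intros; apply Rabs_pos).
  apply (lim_sqrt_arg _ _ (rsum n (fun i => z i T) + K * T)).
  intros d Hd.
  assert (Ha : rsum n (fun i => z i (T - s) * Rabs (y (t0 + s) i)) <= W d s).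
  { unfold W. apply rsum_le. intros i Hi. apply Rmult_le_compat_l. apply Hzp; auto; lra.
    unfold u. apply sqrt_ge_abs; lra. }
  assert (Hsd : 0 <= sqrt d) by apply sqrt_pos.
  assert (Hb : W d s <= W d 0 + K * sqrt d * T).
  { destruct (Req_dec s 0) as [->|Hs0].
    - assert (0 <= K * sqrt d * T) by (apply Rmult_le_pos; [apply Rmult_le_pos|]; lra). lra.
    - destruct (MVT_cor2 (W d) (W' d) 0 s ltac:(lra) (fun c _ => W_deriv d c Hd)) as [c [Heq Hc]].
      assert (H1 := W'_bound d c Hd ltac:(lra)). fold K in H1.
      assert (W' d c * (s - 0) <= K * sqrt d * T).
      { apply Rle_trans with (K * sqrt d * (s - 0)). apply Rmult_le_compat_r; lra.
        apply Rmult_le_compat_l. apply Rmult_le_pos; lra. lra. }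
      lra. }
  assert (Hc : W d 0 <= rsum n (fun i => z i T * Rabs (y t0 i)) + rsum n (fun i => z i T) * sqrt d).
  { unfold W. rewrite Rmult_comm, <- rsum_scal, <- rsum_plus. apply rsum_le. intros i Hi.
    rewrite Rminus_0_r. unfold u. rewrite Rplus_0_r.
    assert (H0 := Hzp T ltac:(lra) i Hi).
    assert (H1 := sqrt_le_abs_plus (y t0 i) d ltac:(lra)).
    assert (z i T * sqrt (y t0 i ^ 2 + d) <= z i T * (Rabs (y t0 i) + sqrt d)) by (apply Rmult_le_compat_l; auto).
    lra. }
  assert (E : (rsum n (fun i => z i T) + K * T) * sqrt d = rsum n (fun i => z i T) * sqrt d + K * sqrt d * T) by ring.
  lra.
Qed.

End Lyap.
Lemma peval_abs_bound : forall p x y, 0 <= x <= y ->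
  0 <= peval (map Rabs p) y /\ Rabs (peval p x) <= peval (map Rabs p) y.
Proof.
  induction p as [|a p IH]; intros x y Hxy; simpl.
  - rewrite Rabs_R0. lra.
  - destruct (IH x y Hxy) as [H1 H2].
    assert (0 <= Rabs a) by apply Rabs_pos.
    split. nra.
    eapply Rle_trans. apply Rabs_triang. rewrite Rabs_mult, (Rabs_right x) by lra.
    assert (0 <= Rabs (peval p x)) by apply Rabs_pos. nra.
Qed.

Fixpoint fmin (k : nat) (f : nat -> R) : R :=
  match k with O => 1 | S k' => Rmin (fmin k' f) (f k') end.

Lemma fmin_pos : forall k f, (forall i, (i < k)%nat -> 0 < f i) -> 0 < fmin k f.
Proof. induction k; intros f H; simpl. lra. apply Rmin_pos. apply IHk; intros; apply H; lia. apply H; lia. Qed.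

Lemma fmin_le : forall k f i, (i < k)%nat -> fmin k f <= f i.
Proof.
  induction k; intros f i Hi. lia. simpl.
  destruct (Nat.eq_dec i k) as [->|]. apply Rmin_r.
  eapply Rle_trans. apply Rmin_l. apply IHk. lia.
Qed.

Lemma find_k : forall T t, 0 < T -> 0 < t -> exists k, INR k * T < t <= INR (S k) * T.
Proof.
  intros T t HT Ht.
  destruct (archimed_cor1 (T / t) ltac:(apply Rdiv_lt_0_compat; lra)) as [N [HN HN0]].
  assert (HNp : 0 < INR N) by (apply lt_0_INR; lia).
  assert (HtN : t < INR N * T).
  { apply (Rmult_lt_compat_r (t * INR N)) in HN; [|nra].
    replace (/ INR N * (t * INR N)) with t in HN by (field; lra).
    replace (T / t * (t * INR N)) with (INR N * T) in HN by (field; lra). exact HN. }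
  clear HN HN0 HNp. apply Rlt_le in HtN. revert HtN. induction N; intros HtN.
  - simpl in HtN. lra.
  - destruct (Rle_lt_dec t (INR N * T)) as [Hle|Hlt].
    + apply IHN; auto.
    + exists N. lra.
Qed.
Theorem proposition6 (n : nat) (A J : mat) (Tbar : R) (ds : nat) (veps eps : R)
  (zeta gamma : nat -> rpoly) :
  Metzler n A -> nonneg_mat n J -> 0 < Tbar -> 0 < veps -> 0 < eps ->
  (forall i, (i < n)%nat -> deg_le (zeta i) (2 * ds) /\ deg_le (gamma i) (2 * ds)) ->
  (forall i, (i < n)%nat -> is_SOS (peval (gamma i))) ->
  (forall i, (i < n)%nat -> peval (zeta i) Tbar - eps >= 0) ->
  (forall j, (j < n)%nat -> is_SOS (fun tau =>
      - rsum n (fun i => peval (zeta i) tau * A i j) + peval (pderiv (zeta j)) tau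
      - tau * (Tbar - tau) * peval (gamma j) tau)) ->
  (forall j, (j < n)%nat ->
      - rsum n (fun i => peval (zeta i) Tbar * J i j) + peval (zeta j) 0 - veps >= 0) ->
  (forall i, (i < n)%nat -> 0 < peval (zeta i) Tbar) /\
  (forall tau, 0 <= tau <= Tbar -> forall j, (j < n)%nat ->
      rsum n (fun i => peval (zeta i) tau * A i j) - peval (pderiv (zeta j)) tau <= 0) /\
  (forall j, (j < n)%nat ->
      rsum n (fun i => peval (zeta i) Tbar * J i j) - peval (zeta j) 0 + veps <= 0) /\
  impulsive_GAS n A J Tbar.
Proof.
  intros HM HJ HT Hve He Hdeg Hg Hz Hsos Hiv.
  assert (HzT : forall i, (i < n)%nat -> 0 < peval (zeta i) Tbar) by (intros i Hi; specialize (Hz i Hi); lra).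
  assert (HDc : forall tau, 0 <= tau <= Tbar -> forall j, (j < n)%nat ->
      rsum n (fun i => peval (zeta i) tau * A i j) - peval (pderiv (zeta j)) tau <= 0).
  { intros tau Htau j Hj. assert (H1 := sos_nonneg _ (Hsos j Hj) tau). cbv beta in H1.
    assert (H2 := sos_nonneg _ (Hg j Hj) tau).
    assert (0 <= tau * (Tbar - tau) * peval (gamma j) tau) by (apply Rmult_le_pos; [apply Rmult_le_pos|]; lra).
    lra. }
  assert (Hiv' : forall j, (j < n)%nat ->
      rsum n (fun i => peval (zeta i) Tbar * J i j) - peval (zeta j) 0 + veps <= 0)
    by (intros j Hj; specialize (Hiv j Hj); lra).
  split; [exact HzT|split; [exact HDc|split; [exact Hiv'|]]].
  set (z := fun i => peval (zeta i)).
  set (zd := fun i => peval (pderiv (zeta i))).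
  assert (Hder : forall i s, (i < n)%nat -> derivable_pt_lim (z i) s (zd i s)).
  { intros. apply peval_deriv. }
  assert (HD : forall tau, 0 <= tau <= Tbar -> forall j, (j < n)%nat ->
    rsum n (fun i => z i tau * A i j) <= zd j tau).
  { intros tau Htau j Hj. specialize (HDc tau Htau j Hj). unfold z, zd. lra. }
  assert (Hz0 : forall i, (i < n)%nat -> 0 < z i 0).
  { intros j Hj. specialize (Hiv' j Hj).
    assert (0 <= rsum n (fun i => peval (zeta i) Tbar * J i j)).
    { apply rsum_nonneg. intros i Hi. apply Rmult_le_pos. left; auto. apply HJ; auto. }
    unfold z. lra. }
  assert (Hpos := z_pos n A z zd Tbar HM Hder HD Hz0 ltac:(lra)).
  set (Z := rsum n (fun i => peval (map Rabs (zeta i)) Tbar)).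
  assert (HZ0 : 0 <= Z).
  { apply rsum_nonneg. intros i Hi. apply (peval_abs_bound (zeta i) 0 Tbar). lra. }
  assert (HZ : forall tau, 0 <= tau <= Tbar -> forall i, (i < n)%nat -> z i tau <= Z).
  { intros tau Htau i Hi. unfold z, Z.
    eapply Rle_trans. apply RRle_abs.
    eapply Rle_trans. apply (peval_abs_bound (zeta i) tau Tbar); lra.
    apply (rsum_ge_term n (fun i => peval (map Rabs (zeta i)) Tbar) i Hi).
    intros j Hj _. apply (peval_abs_bound (zeta j) 0 Tbar). lra. }
  set (m := fmin n (fun i => exp (- Rabs (A i i) * Tbar) * z i 0)).
  assert (Hm0 : 0 < m).
  { apply fmin_pos. intros i Hi. apply Rmult_lt_0_compat. apply exp_pos. auto. }
  assert (Hm : forall tau, 0 <= tau <= Tbar -> forall i, (i < n)%nat -> m <= z i tau).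
  { intros tau Htau i Hi. eapply Rle_trans. apply (fmin_le n _ i Hi). cbv beta.
    eapply Rle_trans; [|apply (z_lower n A z zd Tbar HM Hder HD tau Htau)]; auto.
    - apply Rmult_le_compat_r. left; auto.
      assert (- Rabs (A i i) * Tbar <= A i i * tau).
      { assert (Ha : - Rabs (A i i) <= A i i) by (rewrite <- Rabs_Ropp; apply Rle_trans with (- - A i i); [apply Ropp_le_contravar, RRle_abs| lra]).
        assert (0 <= Rabs (A i i)) by apply Rabs_pos.
        nra. }
      destruct (Rle_lt_or_eq_dec _ _ H) as [Hl|He']. left; apply exp_increasing; auto. rewrite He'; lra.
    - intros s Hs j Hj. left. apply Hpos; auto. lra. }
  set (q := Z / (Z + veps)).
  assert (Hq0 : 0 <= q) by (unfold q; apply Rle_mult_inv_pos; lra).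
  assert (Hq1 : q < 1) by (unfold q; apply (Rmult_lt_reg_r (Z + veps)); [lra|]; unfold Rdiv; rewrite Rmult_assoc, Rinv_l; lra).
  assert (Hsol : forall x0 x, impulsive_sol n A J Tbar x0 x ->
     norm1 n (x 0) = norm1 n x0 /\
     forall k t, INR k * Tbar < t <= INR (S k) * Tbar -> m * norm1 n (x t) <= q ^ k * (Z * norm1 n x0)).
  { intros x0 x [Hx0 Hk]. split.
    { unfold norm1; apply rsum_ext; intros i Hi; rewrite Hx0; auto. }
    set (b := fun k => match k with
      | O => rsum n (fun i => z i Tbar * Rabs (x0 i))
      | S k' => rsum n (fun i => z i Tbar * Rabs (mat_vec n J (x (INR (S k') * Tbar)) i)) end).
    assert (Hint : forall k t, INR k * Tbar < t <= INR (S k) * Tbar ->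
       rsum n (fun i => z i (Tbar - (t - INR k * Tbar)) * Rabs (x t i)) <= b k).
    { intros k t Ht. destruct (Hk k) as [y [Hyf [Hy0 Hyx]]].
      assert (Hk1 : INR (S k) * Tbar = INR k * Tbar + Tbar) by (rewrite S_INR; ring).
      assert (L := lyap_interval n A z zd Tbar Z HM Hder HD
        (fun tau Ht i Hi => Rlt_le _ _ (Hpos tau Ht i Hi)) HZ0 HZ y (INR k * Tbar) Hyf HT
        (t - INR k * Tbar) ltac:(lra)).
      replace (INR k * Tbar + (t - INR k * Tbar)) with t in L by ring.
      eapply Rle_trans; [|eapply Rle_trans; [exact L|]].
      - right. apply rsum_ext. intros i Hi. rewrite (Hyx t i Hi Ht). reflexivity.
      - right. destruct k; (apply rsum_ext; intros i Hi; rewrite (Hy0 i Hi); reflexivity). }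
    assert (Hstep : forall k, b (S k) <= q * b k).
    { intros k. set (X := x (INR (S k) * Tbar)).
      assert (Hk1 : INR (S k) * Tbar = INR k * Tbar + Tbar) by (rewrite S_INR; ring).
      assert (HP : rsum n (fun i => z i 0 * Rabs (X i)) <= b k).
      { assert (H := Hint k (INR (S k) * Tbar) ltac:(lra)).
        replace (Tbar - (INR (S k) * Tbar - INR k * Tbar)) with 0 in H by lra. exact H. }
      set (P := rsum n (fun i => z i 0 * Rabs (X i))) in *.
      set (N := norm1 n X).
      assert (HN0 : 0 <= N) by (apply rsum_nonneg; intros; apply Rabs_pos).
      assert (HPN : P <= Z * N).
      { unfold P, N, norm1. rewrite <- rsum_scal. apply rsum_le. intros i Hi.
        apply Rmult_le_compat_r. apply Rabs_pos. apply HZ; auto; lra. }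
      assert (Hb1 : b (S k) <= P - veps * N).
      { change (b (S k)) with (rsum n (fun i => z i Tbar * Rabs (mat_vec n J X i))).
        apply Rle_trans with (rsum n (fun i => z i Tbar * rsum n (fun j => J i j * Rabs (X j)))).
        { apply rsum_le. intros i Hi. apply Rmult_le_compat_l. left; apply HzT; auto.
          unfold mat_vec. eapply Rle_trans. apply rsum_abs. apply rsum_le. intros j Hj.
          rewrite Rabs_mult, (Rabs_right (J i j)) by (apply Rle_ge, HJ; auto). lra. }
        assert (E1 : rsum n (fun i => z i Tbar * rsum n (fun j => J i j * Rabs (X j))) =
                     rsum n (fun j => rsum n (fun i => z i Tbar * J i j) * Rabs (X j))).
        { transitivity (rsum n (fun i => rsum n (fun j => z i Tbar * J i j * Rabs (X j)))).
          - apply rsum_ext. intros i Hi. rewrite <- rsum_scal. apply rsum_ext. intros; ring.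
          - rewrite rsum_swap. apply rsum_ext. intros j Hj. rewrite Rmult_comm, <- rsum_scal.
            apply rsum_ext. intros; ring. }
        rewrite E1.
        apply Rle_trans with (rsum n (fun j => (z j 0 - veps) * Rabs (X j))).
        { apply rsum_le. intros j Hj. apply Rmult_le_compat_r. apply Rabs_pos.
          specialize (Hiv' j Hj). unfold z. lra. }
        right. unfold P, N, norm1.
        transitivity (rsum n (fun j => z j 0 * Rabs (X j) + - (veps * Rabs (X j)))).
        - apply rsum_ext; intros; ring.
        - rewrite rsum_plus, rsum_opp, rsum_scal. ring. }
      assert (HqP : P - veps * N <= q * P).
      { set (w := / (Z + veps)).
        assert (Hw : 0 < w) by (unfold w; apply Rinv_0_lt_compat; lra).
        assert (Hw1 : w * (Z + veps) = 1) by (unfold w; field; lra).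
        assert (Hqw : q = 1 - veps * w) by (unfold q, w; field; lra).
        assert (HwP : w * P <= N).
        { replace N with (w * ((Z + veps) * N)) by (rewrite <- Rmult_assoc, Hw1; ring).
          assert (0 <= veps * N) by (apply Rmult_le_pos; lra). apply Rmult_le_compat_l; lra. }
        rewrite Hqw. nra. }
      assert (q * P <= q * b k) by (apply Rmult_le_compat_l; auto).
      lra. }
    assert (Hbk : forall k, b k <= q ^ k * b 0%nat).
    { induction k. simpl; lra. eapply Rle_trans. apply Hstep. simpl pow. rewrite Rmult_assoc.
      apply Rmult_le_compat_l; auto. }
    assert (Hb0 : b 0%nat <= Z * norm1 n x0).
    { change (b 0%nat) with (rsum n (fun i => z i Tbar * Rabs (x0 i))). unfold norm1. rewrite <- rsum_scal.
      apply rsum_le. intros i Hi. apply Rmult_le_compat_r. apply Rabs_pos. apply HZ; auto; lra. }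
    intros k t Ht.
    assert (Hk1 : INR (S k) * Tbar = INR k * Tbar + Tbar) by (rewrite S_INR; ring).
    apply Rle_trans with (rsum n (fun i => z i (Tbar - (t - INR k * Tbar)) * Rabs (x t i))).
    { unfold norm1. rewrite <- rsum_scal. apply rsum_le. intros i Hi. apply Rmult_le_compat_r.
      apply Rabs_pos. apply Hm; auto. lra. }
    eapply Rle_trans. apply Hint; auto. eapply Rle_trans. apply Hbk.
    apply Rmult_le_compat_l; auto. apply pow_le; auto. }
  assert (Hqk : forall k, q ^ k <= 1).
  { intro k. rewrite <- (pow1 k). apply pow_incr. lra. }
  split.
  - intros e He0. exists (Rmin e (e * m / (Z + 1))). split.
    { apply Rmin_pos. lra. apply Rdiv_lt_0_compat; nra. }
    intros x0 x Hs HN t Ht. destruct (Hsol x0 x Hs) as [H0 Hb].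
    destruct (Req_dec t 0) as [->|Ht0].
    { rewrite H0. eapply Rlt_le_trans. exact HN. apply Rmin_l. }
    destruct (find_k Tbar t HT ltac:(lra)) as [k Hk]. specialize (Hb k t Hk).
    set (N0 := norm1 n x0) in *.
    assert (HN0 : 0 <= N0) by (apply rsum_nonneg; intros; apply Rabs_pos).
    assert (HN1 : N0 < e * m / (Z + 1)) by (eapply Rlt_le_trans; [exact HN| apply Rmin_r]).
    assert (HN2 : (Z + 1) * N0 < e * m).
    { apply (Rmult_lt_compat_l (Z + 1)) in HN1; [|lra].
      replace ((Z + 1) * (e * m / (Z + 1))) with (e * m) in HN1 by (field; lra). exact HN1. }
    assert (Hx : q ^ k * (Z * N0) <= Z * N0).
    { assert (0 <= Z * N0) by (apply Rmult_le_pos; lra). specialize (Hqk k).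
      assert (0 <= q ^ k) by (apply pow_le; lra). nra. }
    assert (m * norm1 n (x t) < e * m) by nra.
    nra.
  - intros x0 x Hs e He0. destruct (Hsol x0 x Hs) as [H0 Hb].
    set (N0 := norm1 n x0) in *.
    assert (HN0 : 0 <= N0) by (apply rsum_nonneg; intros; apply Rabs_pos).
    set (c := e * m / (Z * N0 + 1)).
    assert (HZN : 0 <= Z * N0) by (apply Rmult_le_pos; lra).
    assert (Hc : 0 < c) by (unfold c; apply Rdiv_lt_0_compat; nra).
    destruct (pow_lt_1_zero q ltac:(rewrite Rabs_right; lra) c Hc) as [K HK].
    exists (INR (S K) * Tbar). intros t Ht.
    assert (HSK : 0 < INR (S K)) by (apply lt_0_INR; lia).
    assert (Htp : 0 < t) by nra.
    destruct (find_k Tbar t HT Htp) as [k Hk]. specialize (Hb k t Hk).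
    assert (HkK : (k >= K)%nat).
    { assert (INR (S K) <= INR (S k)).
      { apply (Rmult_le_reg_r Tbar); lra. }
      apply INR_le in H. lia. }
    specialize (HK k HkK). rewrite Rabs_right in HK by (apply Rle_ge, pow_le; lra).
    assert (Hqk0 : 0 <= q ^ k) by (apply pow_le; lra).
    assert (q ^ k * (Z * N0) <= q ^ k * (Z * N0 + 1)) by nra.
    assert (q ^ k * (Z * N0 + 1) < c * (Z * N0 + 1)) by (apply Rmult_lt_compat_r; lra).
    assert (Ec : c * (Z * N0 + 1) = e * m) by (unfold c; field; lra).
    assert (m * norm1 n (x t) < e * m) by lra.
    nra.
Qed.
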